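(* Let $k<n$ and let $X$ be any network constructor which, on a population of $n$ nodes, constructs a $k$-regular network (a spanning network in which every node has degree exactly $k$). Then, under the uniform random scheduler, the running time of $X$ is $\Omega(n)$ parallel time, i.e. $\Omega(n^2)$ interactions.
   Context: Network constructor model: there are $n$ nodes and every pair of nodes may interact. Each node has a state from a finite set $Q$; each of the $n(n-1)/2$ node pairs carries an edge state in $\{0,1\}$ (inactive/active), all initially $0$. At each discrete step the uniform random scheduler picks an unordered pair $\{u,v\}$ uniformly at random among all $n(n-1)/2$ pairs, independently of the past, and the two nodes and their edge are updated according to a transition function $\delta:Q\times Q\times\{0,1\}\to Q\times Q\times\{0,1\}$. The output graph of a configuration consists of the nodes in output states and the active edges between them. An execution constructs $G$ if its output graph is, from some step on, always isomorphic to $G$; the running time is the first such step, and parallel time is the number of steps divided by $n$. *)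

(* Defs.v *)
From HB Require Import structures.
From mathcomp Require Import all_boot all_order all_algebra.
From mathcomp Require Import all_classical all_reals all_analysis.
Set Implicit Arguments. Unset Strict Implicit. Unset Printing Implicit Defensive.
Import Order.TTheory GRing.Theory Num.Theory.
Local Open Scope classical_set_scope.
Local Open Scope ring_scope.

(* A network constructor: finite state set Q, common initial node state q0,
   output states, and transition function
   delta : Q x Q x {0,1} -> Q x Q x {0,1}. *)
Record protocol := Protocol {
  pstate : finType;
  pinit : pstate;
  pout : pred pstate;
  pdelta : pstate -> pstate -> bool -> pstate * pstate * bool }.

(* A configuration on n nodes: node states and (symmetric) edge states. *)
Definition config (X : protocol) (n : nat) : Type :=
  (('I_n -> pstate X) * ('I_n -> 'I_n -> bool))%type.

Definition init_config (X : protocol) (n : nat) : config X n :=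
  (fun _ => pinit X, fun _ _ => false).

(* One interaction of the (distinct) nodes u, v; the edge {u,v} is updated
   symmetrically.  An (impossible) self-interaction u = v changes nothing. *)
Definition step (X : protocol) (n : nat) (c : config X n) (uv : 'I_n * 'I_n)
  : config X n :=
  let u := uv.1 in let v := uv.2 in
  if u == v then c else
  let '(a, b, e) := @pdelta X (c.1 u) (c.1 v) (c.2 u v) in
  (fun x => if x == u then a else if x == v then b else c.1 x,
   fun x y => if ((x == u) && (y == v)) || ((x == v) && (y == u)) then e
              else c.2 x y).

Fixpoint exec (X : protocol) (n : nat) (sch : nat -> 'I_n * 'I_n) (t : nat)
  : config X n :=
  match t with
  | 0 => init_config X n
  | t'.+1 => step (exec X sch t') (sch t')
  end.

Definition output_iso (X : protocol) (n m : nat) (c : config X n)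
  (G : 'I_m -> 'I_m -> bool) : Prop :=
  exists f : 'I_m -> 'I_n,
    [/\ injective f,
        (forall x, @pout X (c.1 x) <-> exists i, f i = x) &
        (forall i j, G i j = c.2 (f i) (f j))].

Definition kregular (n k : nat) (G : 'I_n -> 'I_n -> bool) : Prop :=
  [/\ (forall i j, G i j = G j i), (forall i, G i i = false) &
      (forall i, #|[set j | G i j]| = k)].

Definition constructs_kreg_from (X : protocol) (n k : nat)
  (sch : nat -> 'I_n * 'I_n) (t : nat) : Prop :=
  exists G : 'I_n -> 'I_n -> bool,
    kregular k G /\ forall s, (t <= s)%N -> output_iso (exec X sch s) G.

(* Running time (number of interactions): the first such step; +oo if none. *)
Definition running_time (R : realType) (X : protocol) (n k : nat)
  (sch : nat -> 'I_n * 'I_n) : \bar R :=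
  ereal_inf [set (t%:R)%:E | t in [set t | constructs_kreg_from X k sch t]].

(* sched is an i.i.d. sequence of scheduler choices on the probability space:
   at each step an ordered pair (u,v) of distinct nodes is chosen uniformly
   among the n(n-1) of them, independently of the past (so the unordered pair
   {u,v} is uniform among the n(n-1)/2 pairs). *)
Definition uniform_scheduler (R : realType) (d : measure_display)
  (T : measurableType d) (P : probability T R) (n : nat)
  (sched : nat -> T -> 'I_n * 'I_n) : Prop :=
  (forall i (p : 'I_n * 'I_n), measurable (sched i @^-1` [set p])) /\
  forall (t : nat) (ps : nat -> 'I_n * 'I_n),
    P [set w | forall i, (i < t)%N -> sched i w = ps i] =
    (\prod_(i < t) (if (ps i).1 != (ps i).2
                    then ((n * (n - 1))%:R)^-1 else 0))%:E.

(* Main.v *)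
Require Import Defs.
From HB Require Import structures.
From mathcomp Require Import all_boot all_order all_algebra.
From mathcomp Require Import all_classical all_reals all_analysis.
From mathcomp Require Import lra zify.
Import Order.TTheory GRing.Theory Num.Theory.
Local Open Scope classical_set_scope.
Local Open Scope ring_scope.

Section Comb.
Variables (X : protocol) (n k : nat).
Local Notation cfg := (config X n).
Local Open Scope nat_scope.
Local Close Scope classical_set_scope.

Definition deg (c : cfg) (x : 'I_n) : nat := #|[set y | (y != x) && c.2 x y]|.
Definition allk (c : cfg) : bool := [forall x, deg c x == k].
Definition symc (c : cfg) : Prop := forall x y, c.2 x y = c.2 y x.

Lemma deg_split (c : cfg) x v : x != v ->
  deg c x = (c.2 x v : nat) + #|[set y | [&& y != x, y != v & c.2 x y]]|.
Proof.
move=> xv; rewrite /deg (cardsD1 v) inE eq_sym xv /=; congr (_ + _).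
apply: eq_card => y; rewrite !inE; by case: (y == v); rewrite ?andbF ?andbT.
Qed.

Lemma exec_sym (sch : nat -> 'I_n * 'I_n) t : symc (exec X sch t).
Proof.
elim: t => [|t IH] x y //=.
rewrite /step; case: eqP => // _.
case: (pdelta _ _ _) => [[a b] e] /=.
by rewrite IH; case: (x == _); case: (y == _); case: (x == _); case: (y == _).
Qed.

Lemma exec_prefix (sch sch' : nat -> 'I_n * 'I_n) t : (forall i, (i < t)%N -> sch i = sch' i) ->
  exec X sch t = exec X sch' t.
Proof.
elim: t => [|t IH] H //=.
rewrite IH; last by move=> i it; apply: H; exact: ltnW.
by rewrite H.
Qed.

Lemma key (c : cfg) (p : 'I_n * 'I_n) : symc c -> ~~ allk c -> allk (step c p) ->
  forall x, (deg c x != k) = (x == p.1) || (x == p.2).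
Proof.
case: p => u v sc nak ak /=.
rewrite /step /= in ak.
case: eqP ak => [-> ak|/eqP uv]; first by rewrite ak in nak.
case E: (pdelta _ _ _) => [[a b] e] ak.
set c' := (_, _) in ak.
have Hc'2 x y : c'.2 x y = if ((x == u) && (y == v)) || ((x == v) && (y == u)) then e else c.2 x y by [].
have ak' x : deg c' x = k by apply/eqP; move/forallP: ak.
have other x : x != u -> x != v -> deg c x = deg c' x.
  move=> xu xv; apply: eq_card => y; rewrite !inE Hc'2.
  by rewrite (negbTE xu) (negbTE xv).
have Su : #|[set y | [&& y != u, y != v & c.2 u y]]| = #|[set y | [&& y != u, y != v & c'.2 u y]]|.
  apply: eq_card => y; rewrite !inE Hc'2 eqxx /=.
  by rewrite (negbTE uv) /= orbF; case: (y == v) => /=; rewrite ?andbF.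
have Sv : #|[set y | [&& y != v, y != u & c.2 v y]]| = #|[set y | [&& y != v, y != u & c'.2 v y]]|.
  apply: eq_card => y; rewrite !inE Hc'2 eqxx /= [v == u]eq_sym (negbTE uv) /=.
  by case: (y == u) => /=; rewrite ?andbF.
have vu : v != u by rewrite eq_sym.
have du := @deg_split c _ _ uv; have du' := @deg_split c' _ _ uv.
have dv := @deg_split c _ _ vu; have dv' := @deg_split c' _ _ vu.
have e1 : c'.2 u v = e by rewrite Hc'2 !eqxx.
have e2 : c'.2 v u = e by rewrite Hc'2 !eqxx orbT.
have s := sc v u.
have hne : e != c.2 u v.
  apply/negP => /eqP he; move/negP: nak; apply; apply/forallP => x.
  case: (x =P u) => [->|/eqP xu].
    by rewrite du Su -he -e1 -du' ak' eqxx.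
  case: (x =P v) => [->|/eqP xv].
    by rewrite dv Sv s -he -e2 -dv' ak' eqxx.
  by rewrite other // ak' eqxx.
have nb : forall b1 b2 : bool, b1 != b2 -> (b2 : nat) != b1 by do 2 case.
move=> x; case: (x =P u) => [->|/eqP xu].
  by rewrite /= du Su -(ak' u) du' e1 eqn_add2r; apply: nb.
rewrite /=; case: (x =P v) => [->|/eqP xv].
  by rewrite ?eqxx ?orbT dv Sv -(ak' v) dv' e2 eqn_add2r s; apply: nb.

by rewrite other // ak' eqxx.
Qed.

Lemma bad_card (c : cfg) : symc c ->
  (#|[set p | ~~ allk c && allk (step c p)]| <= 2)%N.
Proof.
move=> sc.
case: (set_0Vmem [set p | ~~ allk c && allk (step c p)]) => [->|[[a b] H]].
  by rewrite cards0.
move: (H); rewrite inE => /andP [nak ak].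
have Ka := @key c (a, b) sc nak ak.
apply: (@leq_trans #|[set (a, b); (b, a)]|); last first.
  by rewrite cards2; case: (_ != _).
apply: subset_leq_card; apply/fintype.subsetP => [[u v]]; rewrite !inE => /andP [_ ak2].
have Ku := @key c (u, v) sc nak ak2.
have hu : (u == a) || (u == b) by rewrite -Ka Ku eqxx.
have hv : (v == a) || (v == b) by rewrite -Ka Ku eqxx orbT.
have ab : a != b.
  apply/negP => /eqP ab; subst b.
  by move: ak; rewrite /step /= eqxx (negbTE nak).
have uvne : u != v.
  apply/negP => /eqP uv; subst v.
  by move: ak2; rewrite /step /= eqxx (negbTE nak).
case/orP: hu => /eqP ?; case/orP: hv => /eqP ?; subst; rewrite ?eqxx ?orbT //.
all: by rewrite eqxx in uvne.
Qed.


Lemma iso_allk (c : cfg) (G : 'I_n -> 'I_n -> bool) :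
  kregular k G -> output_iso c G -> allk c.
Proof.
case=> Gs Gd Gk [f [finj _ Gf]].
have [g fg gf] := injF_bij finj.
apply/forallP => x; rewrite -(gf x); set i := g x.
rewrite /deg -(Gk i) (_ : [set y | (y != f i) && c.2 (f i) y] = f @: [set j | G i j]).
  rewrite card_imset //; apply/eqP; apply: eq_card => j.
  by rewrite inE /in_mem /= /in_set asboolb.
apply/setP => y; rewrite -(gf y) inE (mem_imset _ _ finj) inE -Gf (inj_eq finj).
by case: (g y =P i) => [->|]; rewrite ?Gd.
Qed.
Lemma init_nallk : (0 < k)%N -> (0 < n)%N -> ~~ allk (init_config X n).
Proof.
move=> k0 n0; apply/negP => /forallP H; have := eqP (H (Ordinal n0)).
rewrite /deg /= (_ : [set y | (y != Ordinal n0) && false] = finset.set0) ?cards0.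
  by move=> kk; rewrite -kk in k0.
by apply/setP => y; rewrite !inE andbF.
Qed.

Lemma first_hit (sch : nat -> 'I_n * 'I_n) t :
  ~~ allk (exec X sch 0) -> allk (exec X sch t) ->
  exists2 s, (s < t)%N & ~~ allk (exec X sch s) && allk (exec X sch s.+1).
Proof.
move=> h0; elim: t => [|t IH] ht; first by rewrite ht in h0.
case: (boolP (allk (exec X sch t))) => [a|na].
  by case: (IH a) => s st hs; exists s => //; exact: ltnW.
by exists t => //; rewrite na.
Qed.
End Comb.


Section Sub.
Context d (T : measurableType d) (R : realType) (mu : {measure set T -> \bar R}).

Lemma subadd_seq (I : Type) (r : seq I) (Pr : pred I) (F : I -> set T) :
  (forall i, measurable (F i)) ->
  (mu (\big[setU/set0]_(i <- r | Pr i) F i) <= \sum_(i <- r | Pr i) mu (F i))%E.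
Proof.
move=> mF; elim: r => [|i r IH]; first by rewrite !big_nil measure0.
rewrite !big_cons; case: ifP => // _.
apply: le_trans (measureU2 _ _ _) _ => //.
  by apply: bigsetU_measurable => j _; exact: mF.
exact: leeD.
Qed.

Lemma in_bigsetU (I : eqType) (r : seq I) (Pr : pred I) (F : I -> set T) i x :
  i \in r -> Pr i -> F i x -> (\big[setU/set0]_(j <- r | Pr j) F j) x.
Proof.
elim: r => // j r IH; rewrite inE big_cons => /orP [/eqP <-|ir] Pi Fx.
  by rewrite Pi; left.
case: ifP => _; [right|]; exact: IH.
Qed.

Import HBNNSimple.
Lemma le_int_nnsfun (f : T -> \bar R) (h : {nnsfun T >-> R}) :
  (forall x, 0 <= f x)%E -> (forall x, (h x)%:E <= f x)%E ->
  (\int[mu]_x (h x)%:E <= \int[mu]_x f x)%E.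
Proof.
move=> f0 hf; rewrite integral_nnsfun // (ge0_integralTE _ f0).
rewrite patch_setT.
by apply: ereal_sup_ubound; exists h.
Qed.
End Sub.
Arguments subadd_seq {d T R} mu {I} r Pr F.
Arguments in_bigsetU {d T I} r Pr F i x.
Arguments le_int_nnsfun {d T R} mu f h.


Section Prob.
Context (R : realType) (d : measure_display) (T : measurableType d)
  (P : probability T R) (n : nat) (sched : nat -> T -> 'I_n * 'I_n).
Local Notation PP := ('I_n * 'I_n)%type.
Hypothesis Hs : uniform_scheduler P sched.

Definition NN : nat := (n * (n - 1))%N.
Definition wt (p : PP) : R := if p.1 != p.2 then (NN%:R)^-1 else 0.
Definition cyl (t : nat) (ps : nat -> PP) : set T :=
  [set w | forall i, (i < t)%N -> sched i w = ps i].
Definition ext s (h : {ffun 'I_s -> PP}) (p : PP) : nat -> PP :=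
  fun i => oapp h p (insub i).

Lemma ext_lt s h p i (Hi : (i < s)%N) : @ext s h p i = h (Ordinal Hi).
Proof. by rewrite /ext insubT. Qed.

Lemma ext_ge s h p i : ~~ (i < s)%N -> @ext s h p i = p.
Proof. by move=> Hi; rewrite /ext insubN. Qed.

Lemma cyl_meas t ps : measurable (cyl t ps).
Proof.
elim: t => [|t IH].
  by rewrite (_ : cyl 0 ps = setT) //; apply/seteqP; split => w //=.
rewrite (_ : cyl t.+1 ps = cyl t ps `&` (sched t @^-1` [set ps t])).
  by apply: measurableI => //; exact: Hs.1.
apply/seteqP; split => w /=.
  by move=> H; split; [move=> i it; apply: H; exact: ltnW|exact: H].
move=> [H1 H2] i; rewrite ltnS leq_eqVlt => /orP [/eqP ->|]; first exact: H2.
exact: H1.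
Qed.

Lemma wt_ge0 p : 0 <= wt p.
Proof. by rewrite /wt; case: ifP => //; rewrite invr_ge0 ler0n. Qed.

Lemma wt_le p : wt p <= (NN%:R)^-1.
Proof. by rewrite /wt; case: ifP => // _; rewrite invr_ge0 ler0n. Qed.

Lemma cyl_prob s h p :
  P (cyl s.+1 (@ext s h p)) = ((\prod_(i < s) wt (h i)) * wt p)%:E.
Proof.
rewrite /cyl Hs.2 big_ord_recr /= ext_ge ?ltnn //.
congr ((_ * _)%:E); apply: eq_bigr => i _.
by rewrite (@ext_lt _ _ _ _ (ltn_ord i)); congr (wt (h _)); apply: val_inj.
Qed.

Lemma sum_wt : (1 < n)%N -> \sum_(p : PP) wt p = 1.
Proof.
move=> n1.
rewrite -(pair_bigA _ (fun x y => wt (x, y))) /=.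
have inner x : \sum_(y : 'I_n) wt (x, y) = (NN%:R)^-1 *+ n.-1.
  rewrite (bigID (fun y => x != y)) /= [X in _ + X]big1; last first.
    by move=> y /negPn; rewrite /wt /= => ->.
  rewrite addr0 (eq_bigr (fun _ => (NN%:R)^-1)); last first.
    by move=> y xy; rewrite /wt /= xy.
  rewrite sumr_const; congr (_ *+ _).
  rewrite -[in RHS](card_ord n) -(cardC1 x); apply: eq_card => y.
  by rewrite !inE eq_sym.
rewrite (eq_bigr _ (fun x _ => inner x)) sumr_const card_ord -mulrnA.
rewrite (_ : (n.-1 * n)%N = NN); last by rewrite /NN mulnC subn1.
rewrite -[_ *+ NN]mulr_natr mulVf // pnatr_eq0 -lt0n muln_gt0; apply/andP; split.
  exact: ltnW.
by rewrite subn_gt0.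
Qed.

Variables (X : protocol) (k : nat).

Definition Bset (c : config X n) : {set PP} :=
  [set p | ~~ allk X n k c && allk X n k (step c p)]%SET.

Definition U s (p0 : PP) : set T :=
  \big[setU/set0]_(h : {ffun 'I_s -> PP})
    \big[setU/set0]_(p in Bset (exec X (@ext s h p0) s)) cyl s.+1 (@ext s h p).

Lemma U_meas s p0 : measurable (U s p0).
Proof.
apply: bigsetU_measurable => h _; apply: bigsetU_measurable => p _.
exact: cyl_meas.
Qed.

Lemma U_bound s p0 : (1 < n)%N -> (P (U s p0) <= (2 / NN%:R)%:E)%E.
Proof.
move=> n1.
apply: le_trans (subadd_seq P _ _ _ _) _.
  by move=> h; apply: bigsetU_measurable => p _; exact: cyl_meas.
apply: (@le_trans _ _ (\sum_(h : {ffun 'I_s -> PP}) ((\prod_(i < s) wt (h i)) * (2 / NN%:R))%:E)%E).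
  apply: lee_sum => h _.
  apply: le_trans (subadd_seq P _ _ _ _) _; first by move=> p; exact: cyl_meas.
  rewrite (eq_bigr (fun p => ((\prod_(i < s) wt (h i)) * wt p)%:E)); last by move=> p _; exact: cyl_prob.
  rewrite sumEFin lee_fin -mulr_sumr; apply: ler_wpM2l.
    by apply: prodr_ge0 => i _; exact: wt_ge0.
  apply: le_trans; first by apply: ler_sum => p _; exact: wt_le.
  rewrite sumr_const -[_ *+ #|_|]mulr_natr [2 / _]mulrC; apply: ler_wpM2l; first by rewrite invr_ge0 ler0n.
  rewrite ler_nat; apply: bad_card; exact: exec_sym.
rewrite sumEFin lee_fin -mulr_suml.
rewrite -(bigA_distr_bigA (fun (_ : 'I_s) (p : PP) => wt p)) /=.
rewrite sum_wt // big1 ?mul1r // .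
Qed.

Definition V m p0 : set T := \big[setU/set0]_(s < m) U s p0.

Lemma V_meas m p0 : measurable (V m p0).
Proof. apply: bigsetU_measurable => s _; exact: U_meas. Qed.

Lemma V_bound m p0 : (1 < n)%N -> (P (V m p0) <= (m%:R * (2 / NN%:R))%:E)%E.
Proof.
move=> n1; apply: le_trans (subadd_seq P _ _ _ _) _; first by move=> s; exact: U_meas.
apply: (@le_trans _ _ (\sum_(s < m) (2 / NN%:R)%:E)%E).
  by apply: lee_sum => s _; exact: U_bound.
by rewrite sumEFin sumr_const card_ord lee_fin -[_ *+ m]mulr_natl lexx.
Qed.

Lemma V_mem m p0 w t : (0 < k)%N ->
  constructs_kreg_from X k (sched^~ w) t -> (t < m)%N -> V m p0 w.
Proof.
move=> k0 [G [Gk Hc]] tm.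
have n0 : (0 < n)%N by case: p0 => x _; exact: (leq_ltn_trans (leq0n x) (ltn_ord x)).
have at_ : allk X n k (exec X (sched^~ w) t).
  by apply: (@iso_allk X n k _ G Gk); apply: Hc.
have [s st /andP [ns as_]] := @first_hit X n k _ _ (@init_nallk X n k k0 n0) at_.
pose h := [ffun i : 'I_s => sched i w].
have Eh : exec X (@ext s h p0) s = exec X (sched^~ w) s.
  apply: exec_prefix => i is_; rewrite (@ext_lt _ _ _ _ is_) ffunE //.
apply: (@in_bigsetU _ _ _ _ _ _ (Ordinal (ltn_trans st tm))) => //.
  exact: mem_index_enum.
apply: (@in_bigsetU _ _ _ _ _ _ h) => //; first exact: mem_index_enum.
apply: (@in_bigsetU _ _ _ _ _ _ (sched s w)) => //; first exact: mem_index_enum.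
  by rewrite Eh inE ns.
move=> i; rewrite ltnS leq_eqVlt => /orP [/eqP ->|is_].
  by rewrite ext_ge ?ltnn.
by rewrite (@ext_lt _ _ _ _ is_) ffunE.
Qed.
End Prob.

Import HBNNSimple.

Theorem theorem3 (R : realType) :
  exists (c : R) (n0 : nat), 0 < c /\
  forall (n k : nat) (X : protocol), (n0 <= n)%N -> (1 <= k < n)%N ->
  forall (d : measure_display) (T : measurableType d) (P : probability T R)
         (sched : nat -> T -> 'I_n * 'I_n),
    uniform_scheduler P sched ->
    {ae P, forall w, exists t, constructs_kreg_from X k (sched ^~ w) t} ->
    ((c * (n%:R) ^+ 2)%:E <= \int[P]_w running_time R X k (sched ^~ w))%E.
Proof.
exists (1 / 16), 4%N; split; first by rewrite divr_gt0.
move=> n k X n4 /andP [k1 kn] d T P sched Hs _.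
have n0 : (0 < n)%N by apply: leq_trans n4.
have n1 : (1 < n)%N by apply: leq_trans n4.
pose x0 : 'I_n := Ordinal n0.
pose p0 := (x0, x0).
pose m := (NN n %/ 4)%N.
pose B := ~` @V d T n sched X k m p0.
have mB : measurable B by apply: measurableC; exact: (@V_meas R d T P n sched Hs X k m p0).
have RT0 w : (0 <= running_time R X k (sched ^~ w))%E.
  by apply: le_ereal_inf_tmp => _ [t _ <-]; rewrite lee_fin ler0n.
have RTm w : B w -> ((m%:R)%:E <= running_time R X k (sched ^~ w))%E.
  move=> Bw; apply: le_ereal_inf_tmp => _ [t ht <-]; rewrite lee_fin ler_nat.
  case: (ltnP t m) => // tm; exfalso; apply: Bw; exact: (@V_mem d T n sched X k m p0 w t k1 ht tm).
have m0 : (0 : R) <= m%:R by rewrite ler0n.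
pose h := scale_nnsfun (indic_nnsfun R mB) m0.
have hE w : h w = m%:R * \1_B w by [].
have hle w : ((h w)%:E <= running_time R X k (sched ^~ w))%E.
  rewrite hE indicE; case: (boolP (w \in B)) => [wB|_].
    by rewrite mulr1; apply: RTm; rewrite -in_setE.
  by rewrite mulr0.
apply: le_trans (le_int_nnsfun P _ h RT0 hle).
rewrite (eq_integral (fun x => ((m%:R)%:E * (\1_B x)%:E)%E)); last first.
  by move=> x _; rewrite hE EFinM.
rewrite ge0_integralZl_EFin //; last first.
  by apply/measurable_realfun.measurable_EFinP; exact: measurable_realfun.measurable_indic.
rewrite integral_indic // setIT.
have PB : P B = (1 - P (@V d T n sched X k m p0))%E.
  exact: (probability_setC P (@V_meas R d T P n sched Hs X k m p0)).
have PV := @V_bound R d T P n sched Hs X k m p0 n1.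
have PV0 : (0 <= P (@V d T n sched X k m p0))%E by exact: measure_ge0.
apply: (@le_trans _ _ ((m%:R)%:E * (1 - P (@V d T n sched X k m p0)))%E); last first.
  rewrite le_eqVlt; apply/orP; left; apply/eqP; exact: (congr1 (fun z => ((m%:R)%:E * z)%E) (esym PB)).
move: PV PV0; case: (P _) => [r| |] //= PV PV0.
rewrite lee_fin in PV; rewrite lee_fin in PV0.
rewrite -EFinB -EFinM lee_fin.
have q := divn_eq (NN n) 4.
have rl : (NN n %% 4 < 4)%N by rewrite ltn_mod.
have h4n : (4 * m <= NN n)%N by rewrite /m; lia.
have h8n : (n ^ 2 <= 8 * m)%N.
  rewrite /m; move: q rl; rewrite /NN; set a := (n * (n - 1))%N; set b := (a %/ 4)%N.
  set c := (a %% 4)%N => q rl.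
  have : (n ^ 2 + 6 <= 2 * a)%N by rewrite /a; nia.
  lia.
have NNp : 0 < (NN n)%:R :> R.
  by rewrite ltr0n /NN muln_gt0 n0 subn_gt0.
have h4 : 4 * m%:R <= (NN n)%:R :> R.
  by rewrite -(ler_nat R) natrM in h4n.
have h8 : n%:R ^+ 2 <= 8 * m%:R :> R.
  by rewrite -(ler_nat R) natrX natrM in h8n.
have hr : r <= 1 / 2.
  apply: (le_trans PV); rewrite mulrA ler_pdivrMr //; lra.
nra.
Qed.
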